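(* Let ${\bm X}={\bm Y}$ be a finite set, let $m^{\bm X}_\bullet,m^{\bm Y}_\bullet$ be irreducible and aperiodic Markov transition kernels on it, and let the cost matrix $C$ be a pseudometric on ${\bm X}$. Define $C^{(0)}=C$ and $C^{(l)}_{ij}=d_{\mathrm W}(m^{\bm X}_i,m^{\bm Y}_j;C^{(l-1)})$ for $l\ge1$. Then $(C^{(k)})_{k\in\mathbb{N}}$ converges to a constant matrix.
   Context: For probability measures $\alpha,\beta$ on finite sets and cost $D$, $d_{\mathrm W}(\alpha,\beta;D)=\inf_{(X,Y)\in\mathcal{C}(\alpha,\beta)}\mathbb{E}\,D(X,Y)$, where $\mathcal{C}(\alpha,\beta)$ is the set of couplings of $\alpha,\beta$. $m^{\bm X}_i$ denotes the transition distribution from state $i$. *)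

(* Defs.v *)
From HB Require Import structures.
From mathcomp Require Import all_boot all_order all_algebra.
From mathcomp Require Import all_classical all_reals all_analysis.
Set Implicit Arguments. Unset Strict Implicit. Unset Printing Implicit Defensive.
Import Order.TTheory GRing.Theory Num.Theory.
Local Open Scope ring_scope.
Local Open Scope classical_set_scope.

Section Defs.
Variables (R : realType) (T : finType).

Definition is_prob (a : T -> R) : Prop :=
  (forall x, 0 <= a x) /\ \sum_x a x = 1.

Definition is_markov_kernel (m : T -> T -> R) : Prop :=
  forall i, is_prob (m i).

Fixpoint kpow (m : T -> T -> R) (n : nat) : T -> T -> R :=
  match n with
  | 0 => fun i j => (i == j)%:R
  | n'.+1 => fun i j => \sum_k m i k * kpow m n' k j
  end.

Definition irreducible (m : T -> T -> R) : Prop :=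
  forall i j, exists n : nat, 0 < kpow m n i j.

(* the period of every state (gcd of its return times) is 1 *)
Definition aperiodic (m : T -> T -> R) : Prop :=
  forall i (d : nat),
    (forall n : nat, (0 < n)%N -> 0 < kpow m n i i -> (d %| n)%N) -> d = 1%N.

Definition is_pseudometric (D : T -> T -> R) : Prop :=
  [/\ forall x, D x x = 0,
      forall x y, D x y = D y x &
      forall x y z, D x z <= D x y + D y z].

Definition is_coupling (a b : T -> R) (P : T -> T -> R) : Prop :=
  [/\ forall x y, 0 <= P x y,
      forall x, \sum_y P x y = a x &
      forall y, \sum_x P x y = b y].

Definition dW (a b : T -> R) (D : T -> T -> R) : R :=
  inf [set v : R | exists P, is_coupling a b P /\
                   v = \sum_x \sum_y P x y * D x y].

Fixpoint Citer (mX mY : T -> T -> R) (C : T -> T -> R) (l : nat) : T -> T -> R :=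
  match l with
  | 0 => C
  | l'.+1 => fun i j => dW (mX i) (mY j) (Citer mX mY C l')
  end.
End Defs.

(* Main.v *)
Require Import Defs.
From HB Require Import structures.
From mathcomp Require Import all_boot all_order all_algebra.
From mathcomp Require Import all_classical all_reals all_analysis.
From Stdlib Require Import Classical.
From mathcomp Require Import ring lra.
Import Order.TTheory GRing.Theory Num.Theory numFieldNormedType.Exports.
Local Open Scope ring_scope.
Local Open Scope classical_set_scope.

Section Semigroup.
Local Open Scope nat_scope.
Variable S : nat -> bool.
Hypothesis Spos : forall n, S n -> (0 < n)%N.
Hypothesis Sadd : forall a b, S a -> S b -> S (a + b).
Hypothesis Sne : exists n, S n.
Hypothesis Sgcd : forall d, (forall n, S n -> (d %| n)%N) -> d = 1%N.

Let S0 n := (n == 0%N) || S n.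
Let S0add a b : S0 a -> S0 b -> S0 (a + b).
Proof.
unfold S0; move=> /orP[/eqP->|Ha] /orP[/eqP->|Hb]; rewrite ?add0n ?addn0 ?Ha ?Hb ?orbT //.
by rewrite Sadd ?orbT.
Qed.
Let S0mul u a : S0 a -> S0 (u * a).
Proof.
move=> Ha; elim: u => [|u IH]; first by rewrite mul0n.
by rewrite mulSn S0add.
Qed.

Let g N := \big[gcdn/0%N]_(n < N.+1 | S n) (n : nat).

Let gS N : g N.+1 = if S N.+1 then gcdn (g N) N.+1 else g N.
Proof. by rewrite /g big_mkcond big_ord_recr /= -big_mkcond /=; case: (S N.+1) => //=; rewrite gcdn0. Qed.

Let g0 : g 0 = 0%N.
Proof.
rewrite /g big_mkcond big_ord_recr big_ord0 /=.
by case E: (S 0) => //; have := @Spos _ E.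
Qed.

Let gdvd N n : (n <= N)%N -> S n -> (g N %| n)%N.
Proof.
elim: N => [|N IH] Hn Sn.
  by move: Hn; rewrite leqn0 => /eqP Hn; subst n; have := @Spos _ Sn.
rewrite gS; case: (leqP n N) => Hle.
  case: (S N.+1); last exact: IH.
  by apply: dvdn_trans (IH Hle Sn); apply: dvdn_gcdl.
have -> : n = N.+1 by apply/eqP; rewrite eqn_leq Hn Hle.
have -> : S N.+1 by have -> : N.+1 = n by apply/eqP; rewrite eqn_leq Hn Hle.
exact: dvdn_gcdr.
Qed.

Let gmono N k : (g (k + N) %| g N)%N.
Proof.
elim: k => [|k IH] //=; rewrite addSn gS.
by case: (S (k+N).+1) => //; apply: dvdn_trans (dvdn_gcdl _ _) IH.
Qed.

Let claim1 N : exists P Q, [/\ S0 P, S0 Q & P = Q + g N]%N.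
Proof.
elim: N => [|N [P [Q [HP HQ E]]]].
  by exists 0%N, 0%N; rewrite g0.
rewrite gS; case SN: (S N.+1); last by exists P, Q.
case: (posnP (g N)) => gpos.
  exists N.+1, 0%N; rewrite gpos gcd0n add0n; split; unfold S0; rewrite ?SN ?orbT //.
case: (@egcdnP (g N) N.+1 gpos) => u v Huv _.
exists (u * P)%N, (u * Q + v * N.+1)%N; split.
- exact: S0mul.
- by apply: S0add; apply: S0mul => //; unfold S0; rewrite SN orbT.
- by rewrite E mulnDr Huv addnA.
Qed.

Let claim2 : exists N, g N = 1%N.
Proof.
case: Sne => n0 Sn0.
have gpos N : (n0 <= N)%N -> (0 < g N)%N.
  move=> HN; have := @gdvd N n0 HN Sn0; case: (posnP (g N)) => // ->.
  by rewrite dvd0n => /eqP E; have := @Spos _ Sn0; rewrite E.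
suff H : forall d N, (n0 <= N)%N -> g N = d -> exists N', g N' = 1%N.
  exact: (H _ n0 (leqnn _) erefl).
elim/ltn_ind => d IH N HN gN.
case: (eqVneq d 1%N) => [d1|dn1]; first by exists N; rewrite gN.
have [n [Sn ndn]] : exists n, S n /\ ~~ (d %| n)%N.
  apply: NNPP => H; move/eqP: dn1; apply; apply: Sgcd => n Sn.
  by apply: NNPP => Hd; apply: H; exists n; split => //; apply/negP.
have [N' H1 H2] : exists2 N', (N <= N')%N & (n <= N')%N.
  by exists (maxn N n); [exact: leq_maxl | exact: leq_maxr].
have HN' : (n0 <= N')%N by apply: leq_trans HN H1.
have d1 : (g N' %| d)%N.
  rewrite -gN -(subnK H1); exact: gmono.
have d2 : (g N' %| n)%N by apply: gdvd.
have dpos : (0 < d)%N by rewrite -gN gpos.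
eapply (IH (g N')); [|exact HN'|reflexivity].
rewrite ltn_neqAle dvdn_leq // andbT; apply/eqP => E.
by move: ndn; rewrite -E d2.
Qed.

Lemma semigroup_large : exists N, forall n, (N <= n)%N -> S n.
Proof.
case: claim2 => N gN; case: (claim1 N) => P [Q [HP HQ E]].
rewrite gN in E.
case: (posnP Q) => Qpos.
  subst Q; exists 1%N => n Hn.
  have S1 : S 1 by move: HP; rewrite E; unfold S0.
  elim: n Hn => [|n IH] //; case: n IH => [|n] IH _ //.
  by rewrite -addn1; apply: Sadd => //; apply: IH.
have SQ : S Q by move: HQ; unfold S0; rewrite (negbTE (lt0n_neq0 Qpos)).
have SP : S P by move: HP; unfold S0; rewrite E addn1.
exists (Q * Q)%N => n Hn.
have Hq : (Q <= n %/ Q)%N by rewrite leq_divRL.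
have Hr : (n %% Q < Q)%N by rewrite ltn_mod.
have Hrq : (n %% Q <= n %/ Q)%N by apply: leq_trans (ltnW Hr) Hq.
have En : n = ((n %/ Q - n %% Q) * Q + n %% Q * P)%N.
  rewrite E mulnDr muln1 addnA -mulnDl subnK //.
  exact: divn_eq.
have npos : (0 < n)%N by apply: leq_trans Hn; rewrite muln_gt0 Qpos.
have : S0 n by rewrite En; apply: S0add; apply: S0mul; unfold S0; rewrite ?SQ ?SP orbT.
by unfold S0; rewrite (negbTE (lt0n_neq0 npos)).
Qed.
End Semigroup.
Section Kpow.
Variables (R : realType) (T : finType) (m : T -> T -> R).
Hypothesis mk : is_markov_kernel m.

Lemma kpow_ge0 n i j : 0 <= kpow m n i j.
Proof.
elim: n i j => [|n IH] i j /=; first by rewrite ler0n.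
by apply: sumr_ge0 => k _; apply: mulr_ge0; [case: (mk i) | exact: IH].
Qed.

Lemma kpow_sum1 n i : \sum_j kpow m n i j = 1.
Proof.
elim: n i => [|n IH] i /=.
  rewrite (bigD1 i) //= eqxx big1 ?addr0 // => k /negbTE.
  by rewrite eq_sym => ->.
rewrite exchange_big /=.
under eq_bigr => k _ do rewrite -mulr_sumr IH mulr1.
by case: (mk i).
Qed.

Lemma kpow_le1 n i j : kpow m n i j <= 1.
Proof.
rewrite -(kpow_sum1 n i) (bigD1 j) //= lerDl.
by apply: sumr_ge0 => k _; exact: kpow_ge0.
Qed.

Lemma kpow1 i j : kpow m 1 i j = m i j.
Proof.
rewrite /= (bigD1 j) //= eqxx mulr1 big1 ?addr0 // => k /negbTE ->.
by rewrite mulr0.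
Qed.

Lemma kpowD a b i j :
  kpow m (a + b) i j = \sum_k kpow m a i k * kpow m b k j.
Proof.
elim: a i => [|a IH] i.
  rewrite add0n /= (bigD1 i) //= eqxx mul1r big1 ?addr0 // => k /negbTE.
  by rewrite eq_sym => ->; rewrite mul0r.
rewrite addSn /=.
under eq_bigr => k _ do rewrite IH mulr_sumr.
rewrite exchange_big /=; apply: eq_bigr => l _.
rewrite mulr_suml; apply: eq_bigr => k _; by rewrite mulrA.
Qed.

Lemma kpow_pos_add a b i k j :
  0 < kpow m a i k -> 0 < kpow m b k j -> 0 < kpow m (a + b) i j.
Proof.
move=> H1 H2; rewrite kpowD (bigD1 k) //=.
apply: ltr_wpDr; first by apply: sumr_ge0 => l _; apply: mulr_ge0; exact: kpow_ge0.
exact: mulr_gt0.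
Qed.
End Kpow.
Lemma unif_bound (U : finType) (P : U -> nat -> Prop) :
  (forall u, exists N, forall n, (N <= n)%N -> P u n) ->
  exists N, forall u n, (N <= n)%N -> P u n.
Proof.
move=> H.
suff [N HN] : exists N, forall u, u \in enum U -> forall n, (N <= n)%N -> P u n.
  by exists N => u n Hn; apply: HN => //; rewrite mem_enum.
elim: (enum U) => [|u s [N2 H2]]; first by exists 0%N.
case: (H u) => N1 H1; exists (maxn N1 N2) => v; rewrite inE => /orP[/eqP->|vs] n Hn.
  by apply: H1; apply: leq_trans Hn; apply: leq_maxl.
by apply: H2 => //; apply: leq_trans Hn; apply: leq_maxr.
Qed.

Lemma primitive (R : realType) (T : finType) (m : T -> T -> R) :
  is_markov_kernel m -> irreducible m -> aperiodic m ->
  exists N, forall n, (N <= n)%N -> forall i j, 0 < kpow m n i j.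
Proof.
move=> mk irr aper.
have Hii i : exists N, forall n, (N <= n)%N -> 0 < kpow m n i i.
  pose S n := ((0 < n)%N && (0 < kpow m n i i)).
  have := @semigroup_large S.
  case.
  - by move=> n /andP[].
  - move=> a b /andP[a0 Ha] /andP[b0 Hb]; apply/andP; split.
      by rewrite addn_gt0 a0.
    exact: kpow_pos_add Ha Hb.
  - have [j Hj] : exists j, 0 < m i j.
      apply: NNPP => H.
      have H0 : forall j, m i j = 0.
        move=> j; case: (mk i) => ge0 _; apply/eqP; rewrite eq_le ge0 andbT.
        by rewrite leNgt; apply/negP => Hj; apply: H; exists j.
      case: (mk i) => _; rewrite big1 // => /eqP; by rewrite eq_sym oner_eq0.
    case: (irr j i) => n Hn; exists (1 + n)%N; apply/andP; split => //.
    have H1 : 0 < kpow m 1 i j by rewrite kpow1.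
    exact: kpow_pos_add H1 Hn.
  - by move=> d Hd; apply: (aper i) => n n0 Hn; apply: Hd; apply/andP.
  move=> N HN; exists N => n /HN /andP[]//.
have [N0 HN0] := @unif_bound T _ Hii.
pose P (p : T * T) n := 0 < kpow m n p.1 p.2.
have Hp : forall p : T * T, exists N, forall n, (N <= n)%N -> P p n.
  case=> i j; case: (irr i j) => r Hr; exists (N0 + r)%N => n Hn.
  rewrite /P /= -(subnK (leq_trans (leq_addl N0 r) Hn)).
  apply: kpow_pos_add Hr; first exact: mk.
  apply: HN0.
  by rewrite -(leq_add2r r) subnK // (leq_trans (leq_addl N0 r) Hn).
have [N HN] := @unif_bound _ _ Hp.
by exists N => n Hn i j; apply: (HN (i, j)).
Qed.
Section DW.
Variables (R : realType) (T : finType).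
Implicit Types (a b : T -> R) (D P : T -> T -> R).

Lemma coupling_val_ge a b D l P : is_prob a -> is_coupling a b P ->
  (forall x y, l <= D x y) -> l <= \sum_x \sum_y P x y * D x y.
Proof.
move=> [_ Ha] [P0 P1 _] Hl.
rewrite -[l]mul1r -Ha mulr_suml; apply: ler_sum => x _.
rewrite -P1 mulr_suml; apply: ler_sum => y _.
by apply: ler_wpM2l.
Qed.

Lemma prod_coupling a b : is_prob a -> is_prob b ->
  is_coupling a b (fun x y => a x * b y).
Proof.
move=> [a0 a1] [b0 b1]; split.
- by move=> x y; apply: mulr_ge0.
- by move=> x; rewrite -mulr_sumr b1 mulr1.
- by move=> y; rewrite -mulr_suml a1 mul1r.
Qed.

Lemma fin_lb D : exists l, forall x y, l <= D x y.
Proof.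
exists (- \sum_x \sum_y `|D x y|) => x y.
apply: lerNnormlW.
rewrite (bigD1 x) //= (bigD1 y) //= -addrA lerDl.
apply: addr_ge0; first by apply: sumr_ge0 => ? _; exact: normr_ge0.
by apply: sumr_ge0 => ? _; apply: sumr_ge0 => ? _; exact: normr_ge0.
Qed.

Lemma dW_le_prod a b D : is_prob a -> is_prob b ->
  dW a b D <= \sum_x \sum_y a x * b y * D x y.
Proof.
move=> Ha Hb; rewrite /dW; apply: ge_inf.
  case: (fin_lb D) => l Hl; exists l => v [P [HP ->]].
  exact: coupling_val_ge HP Hl.
by exists (fun x y => a x * b y); split => //; exact: prod_coupling.
Qed.

Lemma dW_ge a b D l : is_prob a -> is_prob b ->
  (forall x y, l <= D x y) -> l <= dW a b D.
Proof.
move=> Ha Hb Hl; rewrite /dW; apply: lb_le_inf.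
  exists (\sum_x \sum_y a x * b y * D x y).
  by exists (fun x y => a x * b y); split => //; exact: prod_coupling.
by move=> v [P [HP ->]]; exact: coupling_val_ge HP Hl.
Qed.
End DW.
Section Avg.
Variables (R : realType) (T : finType).
Implicit Types (a b : T -> R) (E : T -> T -> R).

Lemma ab_sum1 a b : is_prob a -> is_prob b -> \sum_x \sum_y a x * b y = 1.
Proof.
move=> [_ a1] [_ b1].
by under eq_bigr => x _ do rewrite -mulr_sumr b1 mulr1.
Qed.

Lemma avg_shift a b E u : is_prob a -> is_prob b ->
  \sum_x \sum_y a x * b y * E x y =
  \sum_x \sum_y a x * b y * (E x y - u) + u.
Proof.
move=> Ha Hb.
have -> : \sum_x \sum_y a x * b y * (E x y - u) =
  \sum_x \sum_y a x * b y * E x y - \sum_x \sum_y a x * b y * u.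
  rewrite -sumrB; apply: eq_bigr => x _; rewrite -sumrB; apply: eq_bigr => y _.
  by rewrite mulrBr.
have -> : \sum_x \sum_y a x * b y * u = u.
  rewrite -{2}(mul1r u) -(@ab_sum1 _ _ Ha Hb) mulr_suml; apply: eq_bigr => x _.
  by rewrite mulr_suml.
by rewrite subrK.
Qed.

Lemma avg_le a b E u : is_prob a -> is_prob b -> (forall x y, E x y <= u) ->
  \sum_x \sum_y a x * b y * E x y <= u.
Proof.
move=> Ha Hb HE; rewrite (@avg_shift _ _ _ u Ha Hb) gerDr.
apply: sumr_le0 => x _; apply: sumr_le0 => y _.
apply: mulr_ge0_le0; last by rewrite subr_le0.
by apply: mulr_ge0; [case: Ha | case: Hb].
Qed.

Lemma avg_contract a b E u x0 y0 th : is_prob a -> is_prob b ->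
  (forall x y, E x y <= u) -> th <= a x0 * b y0 ->
  \sum_x \sum_y a x * b y * E x y <= th * E x0 y0 + (1 - th) * u.
Proof.
move=> Ha Hb HE Hth; rewrite (@avg_shift _ _ _ u Ha Hb).
have ab0 x y : 0 <= a x * b y by apply: mulr_ge0; [case: Ha | case: Hb].
have term x y : a x * b y * (E x y - u) <= 0.
  by apply: mulr_ge0_le0 => //; rewrite subr_le0.
have H1 : \sum_x \sum_y a x * b y * (E x y - u) <= a x0 * b y0 * (E x0 y0 - u).
  rewrite (bigD1 x0) //= (bigD1 y0) //= -addrA gerDl.
  rewrite -[0 in X in _ <= X](addr0 0); apply: lerD; first by apply: sumr_le0 => y _.
  by apply: sumr_le0 => x _; apply: sumr_le0 => y _.
have H2 : a x0 * b y0 * (E x0 y0 - u) <= th * (E x0 y0 - u).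
  by apply: ler_wnM2r => //; rewrite subr_le0.
have : \sum_x \sum_y a x * b y * (E x y - u) <= th * (E x0 y0 - u).
  exact: le_trans H1 H2.
move=> H; apply: le_trans (lerD H (lexx u)) _.
by rewrite le_eqVlt; apply/orP; left; apply/eqP; ring.
Qed.
End Avg.
Lemma sum4_exchange (R : realType) (T : finType) (F : T -> T -> T -> T -> R) :
  \sum_x \sum_y \sum_x' \sum_y' F x y x' y' =
  \sum_x' \sum_y' \sum_x \sum_y F x y x' y'.
Proof.
under eq_bigr => x _ do rewrite exchange_big /=.
rewrite exchange_big /=; apply: eq_bigr => x' _.
under eq_bigr => y _ do rewrite exchange_big /=.
by rewrite exchange_big.
Qed.

Section Main.
Variables (R : realType) (T : finType) (mX mY C : T -> T -> R).
Hypotheses (hX : is_markov_kernel mX) (hY : is_markov_kernel mY).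
Let D := Citer mX mY C.

Lemma iter_ub s k i j :
  D (s + k) i j <= \sum_x \sum_y kpow mX s i x * kpow mY s j y * D k x y.
Proof.
elim: s i j => [|s IH] i j.
  rewrite add0n /= (bigD1 i) //= (bigD1 j) //= !eqxx mul1r mul1r.
  rewrite big1 ?addr0; last by move=> y /negbTE; rewrite eq_sym => ->; rewrite mulr0 mul0r.
  rewrite big1 ?addr0 // => x /negbTE; rewrite eq_sym => ->.
  by rewrite big1 // => y _; rewrite !mul0r.
rewrite addSn.
have -> : D (s + k).+1 i j = dW (mX i) (mY j) (D (s + k)) by [].
apply: le_trans (@dW_le_prod _ _ _ _ _ (hX i) (hY j)) _.
apply: le_trans.
  apply: ler_sum => x _; apply: ler_sum => y _.
  apply: ler_wpM2l; last exact: IH.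
  by apply: mulr_ge0; [case: (hX i) | case: (hY j)].
rewrite le_eqVlt; apply/orP; left; apply/eqP.
under eq_bigr => x _ do under eq_bigr => y _ do rewrite mulr_sumr.
under eq_bigr => x _ do under eq_bigr => y _ do under eq_bigr => x' _ do rewrite mulr_sumr.
rewrite sum4_exchange; apply: eq_bigr => x' _; apply: eq_bigr => y' _.
rewrite /= mulr_suml mulr_suml; apply: eq_bigr => x _.
rewrite mulr_sumr mulr_suml; apply: eq_bigr => y _.
ring.
Qed.

Lemma kprob_X s i : is_prob (kpow mX s i).
Proof. by split; [move=> j; exact: kpow_ge0 | exact: kpow_sum1]. Qed.
Lemma kprob_Y s i : is_prob (kpow mY s i).
Proof. by split; [move=> j; exact: kpow_ge0 | exact: kpow_sum1]. Qed.

Lemma D_ub s k x y u : (forall x y, D k x y <= u) -> D (s + k) x y <= u.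
Proof.
move=> Hu; apply: le_trans (iter_ub s k x y) _.
exact: avg_le (kprob_X s x) (kprob_Y s y) Hu.
Qed.

Lemma D_lb s k x y l : (forall x y, l <= D k x y) -> l <= D (s + k) x y.
Proof.
move=> Hl; elim: s x y => [|s IH] x y; first by rewrite add0n.
rewrite addSn.
have -> : D (s + k).+1 x y = dW (mX x) (mY y) (D (s + k)) by [].
exact: dW_ge (hX x) (hY y) IH.
Qed.

Lemma D_contract s k x y th u x0 y0 : (forall x y, D k x y <= u) ->
  th <= kpow mX s x x0 * kpow mY s y y0 ->
  D (s + k) x y <= th * D k x0 y0 + (1 - th) * u.
Proof.
move=> Hu Hth; apply: le_trans (iter_ub s k x y) _.
exact: avg_contract (kprob_X s x) (kprob_Y s y) Hu Hth.
Qed.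
End Main.
Theorem proposition26 (R : realType) (T : finType) (mX mY C : T -> T -> R) :
  is_markov_kernel mX -> is_markov_kernel mY ->
  irreducible mX -> aperiodic mX ->
  irreducible mY -> aperiodic mY ->
  is_pseudometric C ->
  exists c : R, forall i j : T,
    (fun k : nat => Citer mX mY C k i j) @ \oo --> (c : R).
Proof.
move=> hX hY iX aX iY aY _.
case: (pickP (@predT T)) => [x0 _ | Tempty]; last first.
  by exists 0 => i; have := Tempty i.
pose D := Citer mX mY C.
have ub := @D_ub _ _ mX mY C hX hY.
have lb := @D_lb _ _ mX mY C hX hY.
have ctr := @D_contract _ _ mX mY C hX hY.
case: (@primitive _ _ _ hX iX aX) => NX HNX.
case: (@primitive _ _ _ hY iY aY) => NY HNY.
pose s := maxn NX NY.
have posX i j : 0 < kpow mX s i j by apply: HNX; exact: leq_maxl.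
have posY i j : 0 < kpow mY s i j by apply: HNY; exact: leq_maxr.
pose thX := \prod_(p : T * T) kpow mX s p.1 p.2.
pose thY := \prod_(p : T * T) kpow mY s p.1 p.2.
have thX0 : 0 < thX by apply: prodr_gt0 => p _.
have thY0 : 0 < thY by apply: prodr_gt0 => p _.
have thXle i j : thX <= kpow mX s i j.
  rewrite /thX (bigD1 (i, j)) //= -[X in _ <= X]mulr1.
  apply: ler_wpM2l; first exact: ltW.
  apply: prodr_ile1 => p _; rewrite kpow_ge0 //=; exact: kpow_le1.
have thYle i j : thY <= kpow mY s i j.
  rewrite /thY (bigD1 (i, j)) //= -[X in _ <= X]mulr1.
  apply: ler_wpM2l; first exact: ltW.
  apply: prodr_ile1 => p _; rewrite kpow_ge0 //=; exact: kpow_le1.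
pose th := thX * thY.
have th0 : 0 < th by apply: mulr_gt0.
have thle i x j y : th <= kpow mX s i x * kpow mY s j y.
  by apply: ler_pM; [exact: ltW | exact: ltW | exact: thXle | exact: thYle].
have th1 : th <= 1.
  apply: le_trans (thle x0 x0 x0 x0) _.
  rewrite -[1]mulr1; apply: ler_pM; rewrite ?kpow_ge0 //; exact: kpow_le1.
pose p0 := (x0, x0).
pose pM k := Order.arg_max p0 xpredT (fun p : T * T => D k p.1 p.2).
pose pm k := Order.arg_min p0 xpredT (fun p : T * T => D k p.1 p.2).
pose M k := D k (pM k).1 (pM k).2.
pose m k := D k (pm k).1 (pm k).2.
have Mge k x y : D k x y <= M k.
  rewrite /M /pM; case: Order.TotalTheory.arg_maxP => // p _ H; exact: (H (x, y)).
have mle k x y : m k <= D k x y.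
  rewrite /m /pm; case: Order.TotalTheory.arg_minP => // p _ H; exact: (H (x, y)).
have Mmono d k : M (d + k)%N <= M k by apply: ub; exact: Mge.
have mmono d k : m k <= m (d + k)%N by apply: lb; exact: mle.
have mM l k : m l <= M k.
  apply: le_trans (mmono k l) _; apply: le_trans (mle _ x0 x0) _.
  by rewrite addnC; apply: ub; exact: Mge.
pose sp k := M k - m k.
have sp0 k : 0 <= sp k by rewrite subr_ge0.
have spmono d k : sp (d + k)%N <= sp k by apply: lerB.
have spctr k : sp (s + k)%N <= (1 - th) * sp k.
  have H : M (s + k)%N <= th * m k + (1 - th) * M k.
    exact: ctr (Mge k) (thle _ _ _ _).
  have := mmono s k; rewrite /sp; move: H; lra.
have spgeo n : sp (n * s)%N <= (1 - th) ^+ n * sp 0.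
  elim: n => [|n IH]; first by rewrite mul0n expr0 mul1r.
  rewrite mulSn exprS -mulrA; apply: le_trans (spctr _) _.
  by apply: ler_wpM2l => //; rewrite subr_ge0.
pose c := sup (range m).
have hs : has_sup (range m).
  split; first by exists (m 0%N), 0%N.
  by exists (M 0%N) => _ [l _ <-]; exact: mM.
have mc k : m k <= c by apply: sup_upper_bound => //; exists k.
have cM k : c <= M k.
  by apply: ge_sup; [exists (m 0%N), 0%N | move=> _ [l _ <-]; exact: mM].
exists c => i j; apply/cvgrPdist_le => e e0.
have q1 : `|1 - th| < 1.
  rewrite ger0_norm ?subr_ge0 //; lra.
pose e' := e / (sp 0%N + 1).
have e'0 : 0 < e' by apply: divr_gt0 => //; apply: ltr_wpDl => //.
have := cvg_expr q1; move/cvgrPdist_le => /(_ e' e'0) [N _ HN].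
exists (N * s)%N => // t /= Ht.
have HqN : (1 - th) ^+ N <= e'.
  have := HN N (leqnn N); rewrite /= sub0r normrN ger0_norm //.
  by apply: exprn_ge0; rewrite subr_ge0.
have Hsp : sp t <= e.
  rewrite -(subnK Ht); apply: le_trans (spmono _ _) _.
  apply: le_trans (spgeo N) _.
  apply: le_trans (ler_wpM2r (sp0 0%N) HqN) _.
  rewrite /e' -mulrA ger_pMr // mulrC ler_pdivrMr; last by apply: ltr_wpDl.
  by rewrite mul1r lerDl.
have := mc t; have := cM t; have := mle t i j; have := Mge t i j.
move: Hsp; rewrite /sp /D => H1 H2 H3 H4 H5.
rewrite ler_norml; apply/andP; split; lra.
Qed.
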